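(* Let $m\ge 1$, let $\lambda_1\ge 0$ and $\lambda_2\ge 0$, and let $f_1\ge f_2\ge\cdots\ge f_m$ be real numbers. Then there exist real numbers $\tau_{i0}\in[-\lambda_1,\lambda_1]$ for $i=1,\dots,m$ and real numbers $\tau_{ij}\in[-\lambda_2,\lambda_2]$ for $i\neq j\in\{1,\dots,m\}$, satisfying $\tau_{ij}=-\tau_{ji}$ for all $i\ne j$, such that $$f_i+\tau_{i0}+\sum_{j\in\{1,\dots,m\}\setminus\{i\}}\tau_{ij}=0,\qquad i=1,\dots,m,$$ if and only if $$\sum_{j=1}^{k}f_j\le \lambda_1 k+\lambda_2 k(m-k)\quad\text{for } k=1,\dots,m,$$ and $$\sum_{j=k+1}^{m}f_j\ge -\lambda_1(m-k)-\lambda_2 k(m-k)\quad\text{for } k=0,\dots,m-1.$$ *)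

(* Defs.v *)
From mathcomp Require Import all_boot all_order all_algebra.
From mathcomp Require Import all_reals.
Set Implicit Arguments. Unset Strict Implicit. Unset Printing Implicit Defensive.

(* Main.v *)
Require Import Defs.
From mathcomp Require Import all_boot all_order all_algebra.
From mathcomp Require Import all_reals.
From mathcomp Require Import all_classical all_analysis.
From mathcomp Require Import zify ring lra.
Import Order.TTheory GRing.Theory Num.Theory.
Import numFieldNormedType.Exports.
Local Open Scope ring_scope.
Set Implicit Arguments. Unset Strict Implicit.

Definition res (R : realType) (m : nat) (f t0 : 'I_m -> R) (t : 'I_m -> 'I_m -> R) (i : 'I_m) :=
  f i + t0 i + \sum_(j < m | j != i) t i j.
Definition Phi (R : realType) (m : nat) (f t0 : 'I_m -> R) (t : 'I_m -> 'I_m -> R) :=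
  \sum_(i < m) (res f t0 t i) ^+ 2.
Definition feas (R : realType) (m : nat) (lam1 lam2 : R) (t0 : 'I_m -> R) (t : 'I_m -> 'I_m -> R) :=
  (forall i, - lam1 <= t0 i <= lam1) /\ (forall i j, - lam2 <= t i j <= lam2) /\
  (forall i j, t i j = - t j i).

Lemma Phi_delta (R : realType) (m : nat) (f t0 t0' : 'I_m -> R) (t t' : 'I_m -> 'I_m -> R)
  (d : 'I_m -> R) : (forall a, res f t0' t' a = res f t0 t a + d a) ->
  Phi f t0' t' = Phi f t0 t + \sum_(a < m) d a * (d a + 2 * res f t0 t a).
Proof.
move=> h; rewrite /Phi -big_split /=; apply: eq_bigr => a _; rewrite h; ring.
Qed.

Lemma sum_ind (R : realType) (m : nat) (a c : 'I_m) (x : R) : c != a ->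
  \sum_(b < m | b != a) (if b == c then x else 0) = x.
Proof.
move=> ca; rewrite (bigD1 c) //= eqxx big1 ?addr0 // => b /andP[_ /negbTE ->] //.
Qed.

Lemma min_t0 (R : realType) (m : nat) (lam1 lam2 : R) (f t0 : 'I_m -> R) (t : 'I_m -> 'I_m -> R)
  (hfe : feas lam1 lam2 t0 t)
  (hmin : forall t0' t', feas lam1 lam2 t0' t' -> Phi f t0 t <= Phi f t0' t')
  (i : 'I_m) (e : R) : - lam1 <= t0 i - e <= lam1 -> 0 <= e * (e - 2 * res f t0 t i).
Proof.
move=> he; case: hfe => [b0 [bt ant]].
pose t0' a := if a == i then t0 i - e else t0 a.
have fe' : feas lam1 lam2 t0' t.
  split; last by split.
  by move=> a; rewrite /t0'; case: eqP.
have := hmin _ _ fe'.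
rewrite (@Phi_delta _ _ f t0 t0' t t (fun a => if a == i then - e else 0)); last first.
  move=> a; rewrite /res /t0'; case: eqP => [->|_]; last by rewrite addr0.
  rewrite -!addrA; congr (_ + _); ring.
rewrite (bigD1 i) //= eqxx big1 ?addr0; last by move=> a /negbTE ->; rewrite mul0r.
move=> H; nra.
Qed.

Lemma min_t (R : realType) (m : nat) (lam1 lam2 : R) (f t0 : 'I_m -> R) (t : 'I_m -> 'I_m -> R)
  (hfe : feas lam1 lam2 t0 t)
  (hmin : forall t0' t', feas lam1 lam2 t0' t' -> Phi f t0 t <= Phi f t0' t')
  (i j : 'I_m) (e : R) : i != j -> - lam2 <= t i j - e <= lam2 ->
  0 <= e * (e - (res f t0 t i - res f t0 t j)).
Proof.
move=> ij he; case: hfe => [b0 [bt ant]].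
pose t' a b := if (a == i) && (b == j) then t i j - e
               else if (a == j) && (b == i) then t j i + e else t a b.
have ji : j != i by rewrite eq_sym.
have fe' : feas lam1 lam2 t0 t'.
  split; first by [].
  split.
    move=> a b; rewrite /t'; case: ifP => _ //; case: ifP => _; last exact: bt.
    by rewrite (ant j i); move: he => /andP[h1 h2]; apply/andP; split; lra.
  move=> a b; rewrite /t'.
  case: (eqVneq a i) => [->|ai]; case: (eqVneq b j) => [->|bj] /=.
  all: rewrite ?eqxx ?(negbTE ij) ?(negbTE ji) ?andbF /=.
  all: try by rewrite (ant i j); lra.
  all: try exact: ant.
  rewrite [(b == i) && _]andbC; case: ifP => _; last exact: ant.
  rewrite (ant j i); lra.
have := hmin _ _ fe'.
rewrite (@Phi_delta _ _ f t0 t0 t t'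
   (fun a => if a == i then - e else if a == j then e else 0)); last first.
  move=> a; rewrite /res.
  case: (eqVneq a i) => [->|ai].
    have -> : \sum_(b < m | b != i) t' i b =
       \sum_(b < m | b != i) t i b + \sum_(b < m | b != i) (if b == j then - e else 0).
      rewrite -big_split /=; apply: eq_bigr => b _; rewrite /t' eqxx /= (negbTE ij) /=.
      by case: eqP => [->|_]; rewrite ?addr0 //; ring.
    rewrite sum_ind //; ring.
  rewrite ?(negbTE ai); case: (eqVneq a j) => [->|aj].
    have -> : \sum_(b < m | b != j) t' j b =
       \sum_(b < m | b != j) t j b + \sum_(b < m | b != j) (if b == i then e else 0).
      rewrite -big_split /=; apply: eq_bigr => b _; rewrite /t' eqxx /= (negbTE ji) /=.
      by case: eqP => [->|_]; rewrite ?addr0 //; ring.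
    rewrite sum_ind //; ring.
  rewrite addr0; congr (_ + _); apply: eq_bigr => b _.
  by rewrite /t' (negbTE ai) (negbTE aj).
rewrite (bigD1 i) //= eqxx (bigD1 j) //= eqxx (negbTE ji) big1 ?addr0; last first.
  by move=> a /andP[/negbTE -> /negbTE ->]; rewrite mul0r.
move=> H; nra.
Qed.
Lemma antisym_sum (R : realType) (m : nat) (t : 'I_m -> 'I_m -> R)
  (ht : forall i j, t i j = - t j i) (S : {set 'I_m}) :
  \sum_(i in S) \sum_(j < m) t i j = \sum_(i in S) \sum_(j in ~: S) t i j.
Proof.
have E : forall i, \sum_(j < m) t i j = \sum_(j in S) t i j + \sum_(j in ~: S) t i j.
  move=> i; rewrite (bigID (fun j => j \in S)) /=; congr (_ + _).
  by apply: eq_bigl => j; rewrite inE.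
under eq_bigr do rewrite E.
rewrite big_split /=.
set X := \sum_(i in S) \sum_(j in S) t i j.
suff -> : X = 0 by rewrite add0r.
have : X = - X.
  rewrite {1}/X exchange_big /= /X -sumrN; apply: eq_bigr => j _.
  rewrite -sumrN; apply: eq_bigr => i _; exact: ht.
move=> HX; lra.
Qed.

Lemma exists_small (R : realType) (a b : R) : 0 < a -> 0 < b ->
  exists e, 0 < e /\ e <= a /\ e <= b.
Proof.
move=> a0 b0; case: (leP a b) => ab.
  by exists a; split => //; split.
by exists b; split => //; split => //; apply: ltW.
Qed.

Lemma sum_S_res (R : realType) (m : nat) (lam1 lam2 : R) (f t0 : 'I_m -> R) (t : 'I_m -> 'I_m -> R)
  (hfe : feas lam1 lam2 t0 t) (S : {set 'I_m}) :
  \sum_(a in S) res f t0 t a =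
  \sum_(a in S) f a + \sum_(a in S) t0 a + \sum_(a in S) \sum_(b in ~: S) t a b.
Proof.
case: hfe => [b0 [bt ant]].
rewrite /res !big_split /= -antisym_sum //; congr (_ + _).
apply: eq_bigr => a _; rewrite [RHS](bigD1 a) //=.
have -> : t a a = 0 by have := ant a a; lra.
by rewrite add0r.
Qed.

Lemma no_pos (R : realType) (m : nat) (lam1 lam2 : R) (f t0 : 'I_m -> R) (t : 'I_m -> 'I_m -> R)
  (hfe : feas lam1 lam2 t0 t)
  (hmin : forall t0' t', feas lam1 lam2 t0' t' -> Phi f t0 t <= Phi f t0' t')
  (Hup : forall S : {set 'I_m}, (0 < #|S|)%N ->
     \sum_(i in S) f i <= lam1 * #|S|%:R + lam2 * (#|S| * (m - #|S|))%:R) :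
  forall i, res f t0 t i <= 0.
Proof.
move=> i; rewrite leNgt; apply/negP => ri.
have [b0 [bt ant]] := hfe.
pose S := [set a | 0 < res f t0 t a].
have iS : i \in S by rewrite inE.
have hS : (0 < #|S|)%N by apply/card_gt0P; exists i.
have h0 : forall a, a \in S -> t0 a = - lam1.
  move=> a; rewrite inE => ra.
  have /andP[l u] := b0 a.
  case: (eqVneq (t0 a) (- lam1)) => // hne.
  have l' : - lam1 < t0 a by rewrite lt_def hne l.
  have [e [e0 [e1 e2]]] := @exists_small R (t0 a + lam1) (res f t0 t a) ltac:(lra) ra.
  have := @min_t0 R m lam1 lam2 f t0 t hfe hmin a e ltac:(apply/andP; split; lra).
  move=> H; exfalso; nra.
have ht : forall a b, a \in S -> b \notin S -> t a b = - lam2.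
  move=> a b; rewrite !inE -leNgt => ra rb.
  have ab : a != b by apply/eqP => ab; move: ra; rewrite ab; lra.
  have /andP[l u] := bt a b.
  case: (eqVneq (t a b) (- lam2)) => // hne.
  have l' : - lam2 < t a b by rewrite lt_def hne l.
  have [e [e0 [e1 e2]]] := @exists_small R (t a b + lam2)
     ((res f t0 t a - res f t0 t b) / 2) ltac:(lra) ltac:(lra).
  have := @min_t R m lam1 lam2 f t0 t hfe hmin a b e ab ltac:(apply/andP; split; lra).
  move=> H; exfalso; nra.
have Hs := sum_S_res f hfe S.
have E1 : \sum_(a in S) t0 a = - (lam1 * #|S|%:R).
  rewrite (eq_bigr (fun=> - lam1)); last by move=> a /h0.
  by rewrite sumr_const mulr_natr mulNrn.
have E2 : \sum_(a in S) \sum_(b in ~: S) t a b = - (lam2 * (#|S| * (m - #|S|))%:R).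
  have hc : #|~: S| = (m - #|S|)%N by rewrite cardsCs finset.setCK card_ord.
  rewrite (eq_bigr (fun=> - (lam2 *+ (m - #|S|)))); last first.
    move=> a aS; rewrite (eq_bigr (fun=> - lam2)); last first.
      by move=> b; rewrite inE => bS; apply: ht.
    by rewrite sumr_const hc mulNrn.
  by rewrite sumr_const mulNrn -mulrnA mulr_natr mulnC.
rewrite E1 E2 in Hs.
have pos : 0 < \sum_(a in S) res f t0 t a.
  rewrite (bigD1 i) //=; apply: (lt_le_trans ri); rewrite lerDl.
  by apply: sumr_ge0 => a /andP[]; rewrite inE => /ltW.
have := Hup S hS; lra.
Qed.

Lemma no_neg (R : realType) (m : nat) (lam1 lam2 : R) (f t0 : 'I_m -> R) (t : 'I_m -> 'I_m -> R)
  (hfe : feas lam1 lam2 t0 t)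
  (hmin : forall t0' t', feas lam1 lam2 t0' t' -> Phi f t0 t <= Phi f t0' t')
  (Hlo : forall S : {set 'I_m}, (0 < #|S|)%N ->
     - (lam1 * #|S|%:R) - lam2 * (#|S| * (m - #|S|))%:R <= \sum_(i in S) f i) :
  forall i, 0 <= res f t0 t i.
Proof.
move=> i; rewrite leNgt; apply/negP => ri.
have [b0 [bt ant]] := hfe.
pose S := [set a | res f t0 t a < 0].
have iS : i \in S by rewrite inE.
have hS : (0 < #|S|)%N by apply/card_gt0P; exists i.
have h0 : forall a, a \in S -> t0 a = lam1.
  move=> a; rewrite inE => ra.
  have /andP[l u] := b0 a.
  case: (eqVneq (t0 a) lam1) => // hne.
  have u' : t0 a < lam1 by rewrite lt_def eq_sym hne u.
  have [e [e0 [e1 e2]]] := @exists_small R (lam1 - t0 a) (- res f t0 t a) ltac:(lra) ltac:(lra).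
  have := @min_t0 R m lam1 lam2 f t0 t hfe hmin a (- e) ltac:(apply/andP; split; lra).
  move=> H; exfalso; nra.
have ht : forall a b, a \in S -> b \notin S -> t a b = lam2.
  move=> a b; rewrite !inE -leNgt => ra rb.
  have ba : b != a by apply/eqP => ab; move: ra; rewrite -ab; lra.
  have /andP[l u] := bt b a.
  case: (eqVneq (t b a) (- lam2)) => [E|hne].
    by rewrite ant E opprK.
  have l' : - lam2 < t b a by rewrite lt_def hne l.
  have [e [e0 [e1 e2]]] := @exists_small R (t b a + lam2)
     ((res f t0 t b - res f t0 t a) / 2) ltac:(lra) ltac:(lra).
  have := @min_t R m lam1 lam2 f t0 t hfe hmin b a e ba ltac:(apply/andP; split; lra).
  move=> H; exfalso; nra.
have Hs := sum_S_res f hfe S.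
have E1 : \sum_(a in S) t0 a = lam1 * #|S|%:R.
  rewrite (eq_bigr (fun=> lam1)); last by move=> a /h0.
  by rewrite sumr_const mulr_natr.
have E2 : \sum_(a in S) \sum_(b in ~: S) t a b = lam2 * (#|S| * (m - #|S|))%:R.
  have hc : #|~: S| = (m - #|S|)%N by rewrite cardsCs finset.setCK card_ord.
  rewrite (eq_bigr (fun=> lam2 *+ (m - #|S|))); last first.
    move=> a aS; rewrite (eq_bigr (fun=> lam2)); last first.
      by move=> b; rewrite inE => bS; apply: ht.
    by rewrite sumr_const hc.
  by rewrite sumr_const -mulrnA mulr_natr mulnC.
rewrite E1 E2 in Hs.
have neg : \sum_(a in S) res f t0 t a < 0.
  rewrite (bigD1 i) //=; apply: (le_lt_trans _ ri); rewrite gerDl.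
  by apply: sumr_le0 => a /andP[]; rewrite inE => /ltW.
have := Hlo S hS; lra.
Qed.
Lemma card_prefix (m k : nat) : (k <= m)%N -> #|[set j : 'I_m | (j < k)%N]| = k.
Proof.
move=> km.
have -> : [set j : 'I_m | (j < k)%N] = [set widen_ord km i | i : 'I_k].
  apply/setP => j; rewrite !inE; apply/idP/imsetP.
    by move=> jk; exists (Ordinal jk) => //; apply/val_inj.
  by case=> i _ ->; rewrite /= ltn_ord.
rewrite card_imset ?card_ord //; move=> a b /(congr1 val) /= ab; exact: val_inj.
Qed.

Lemma sum_sorted_le (R : realType) (m : nat) (f : 'I_m -> R)
  (hf : forall i j : 'I_m, (i <= j)%N -> f j <= f i) (S : {set 'I_m}) :
  \sum_(i in S) f i <= \sum_(j < m | (j < #|S|)%N) f j.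
Proof.
set k := #|S|.
have km : (k <= m)%N by rewrite /k -[m in (_ <= m)%N]card_ord max_card.
set T := [set j : 'I_m | (j < k)%N].
have -> : \sum_(j < m | (j < k)%N) f j = \sum_(j in T) f j.
  by apply: eq_bigl => j; rewrite inE.
have cT : #|T| = k by exact: card_prefix.
rewrite (big_setID T) [X in _ <= X](big_setID S) /= finset.setIC lerD2l.
case: (posnP k) => [k0|kpos].
  have S0 : S = finset.set0.
    by apply/eqP; rewrite -cards_eq0; apply/eqP.
  have T0 : T = finset.set0 by apply/eqP; rewrite -cards_eq0 cT k0.
  by rewrite S0 T0 finset.setD0 !big_set0.
have pm : (k.-1 < m)%N by rewrite prednK.
pose p := Ordinal pm.
have cD : #|S :\: T| = #|T :\: S|.
  rewrite !cardsD cT [T :&: S]finset.setIC; reflexivity.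
apply: (le_trans (y := \sum_(i in S :\: T) f p)).
  apply: ler_sum => i; rewrite !inE => /andP[iT _]; apply: hf => /=.
  rewrite -leqNgt in iT; rewrite /=; lia.
rewrite sumr_const cD -sumr_const.
apply: ler_sum => i; rewrite !inE => /andP[_ iT]; apply: hf => /=.
rewrite /=; lia.
Qed.

Lemma sum_sorted_ge (R : realType) (m : nat) (f : 'I_m -> R)
  (hf : forall i j : 'I_m, (i <= j)%N -> f j <= f i) (S : {set 'I_m}) :
  \sum_(j < m | (m - #|S| <= j)%N) f j <= \sum_(i in S) f i.
Proof.
have := @sum_sorted_le R m f hf (~: S).
rewrite cardsCs finset.setCK card_ord => H.
have E1 := big_setID (A := [set: 'I_m]) S f.
have E2 := bigID (fun j : 'I_m => (j < m - #|S|)%N) xpredT f.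
rewrite finset.setTI finset.setTD in E1.
have : \sum_(i in [set: 'I_m]) f i = \sum_(i < m) f i by apply: eq_bigl => i; rewrite inE.
move=> E3.
have E4 : \sum_(i < m | ~~ (i < m - #|S|)%N) f i = \sum_(j < m | (m - #|S| <= j)%N) f j.
  by apply: eq_bigl => i; rewrite -leqNgt.
rewrite -E4.
have : \sum_(i < m) f i = \sum_(i in S) f i + \sum_(i in ~: S) f i by rewrite -E3 E1.
rewrite E2 /= => E5.
have E6 : \sum_(i < m | (i < m - #|S|)%N) f i = \sum_(i < m | true && (i < m - #|S|)%N) f i by [].
move: E5 H; rewrite -E6 => E5 H.
by rewrite -(lerD2l (\sum_(i < m | (i < m - #|S|)%N) f i)) E5 addrC lerD2r.
Qed.
Lemma nec_bound (R : realType) (m : nat) (lam1 lam2 : R) (f : 'I_m -> R)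
  (tau0 : 'I_m -> R) (tau : 'I_m -> 'I_m -> R)
  (h0 : forall i, - lam1 <= tau0 i <= lam1)
  (ht : forall i j, i != j -> - lam2 <= tau i j <= lam2)
  (ha : forall i j, i != j -> tau i j = - tau j i)
  (he : forall i, f i + tau0 i + \sum_(j < m | j != i) tau i j = 0)
  (S : {set 'I_m}) :
  `|\sum_(i in S) f i| <= lam1 * #|S|%:R + lam2 * (#|S| * (m - #|S|))%:R.
Proof.
pose t' i j := if i == j then 0 else tau i j.
have ha' : forall i j, t' i j = - t' j i.
  move=> i j; rewrite /t' [j == i]eq_sym; case: eqP => [_|/eqP ij]; first by rewrite oppr0.
  exact: ha.
have hf : forall i, f i = - tau0 i - \sum_(j < m) t' i j.
  move=> i; have := he i.
  have -> : \sum_(j < m | j != i) tau i j = \sum_(j < m) t' i j.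
    rewrite [RHS](bigD1 i) //= /t' eqxx add0r; apply: eq_bigr => j ji.
    by rewrite eq_sym (negbTE ji).
  move=> H; lra.
have -> : \sum_(i in S) f i =
   - (\sum_(i in S) tau0 i + \sum_(i in S) \sum_(j in ~: S) t' i j).
  rewrite -antisym_sum // -big_split /= -sumrN; apply: eq_bigr => i _.
  by rewrite hf opprD.
rewrite normrN; apply: (le_trans (ler_normD _ _)); apply: lerD.
  apply: (le_trans (ler_norm_sum _ _ _)).
  rewrite [lam1 * _]mulr_natr -sumr_const; apply: ler_sum => i _.
  by rewrite ler_norml.
apply: (le_trans (ler_norm_sum _ _ _)).
have -> : lam2 * (#|S| * (m - #|S|))%:R = \sum_(i in S) \sum_(j in ~: S) lam2.
  have hc : #|~: S| = (m - #|S|)%N by rewrite cardsCs finset.setCK card_ord.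
  by rewrite sumr_const sumr_const -mulrnA hc mulr_natr mulnC.
apply: ler_sum => i iS; apply: (le_trans (ler_norm_sum _ _ _)).
apply: ler_sum => j jS; rewrite /t'; case: eqP => [ij|/eqP ij].
  by move: jS; rewrite inE -ij iS.
by rewrite ler_norml; apply: ht.
Qed.
Lemma Phi_ext (R : realType) (m : nat) (f t0 t0' : 'I_m -> R) (t t' : 'I_m -> 'I_m -> R) :
  (forall i, t0 i = t0' i) -> (forall i j, t i j = t' i j) -> Phi f t0 t = Phi f t0' t'.
Proof.
move=> h0 h; apply: eq_bigr => i _; rewrite /res h0; congr ((_ + _) ^+ 2).
by apply: eq_bigr => j _.
Qed.
Lemma cont_sum (R : realType) (T : topologicalType) (I : Type) (r : seq I) (P : pred I)
  (G : I -> T -> R) : (forall j, continuous (G j)) ->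
  continuous (fun v => \sum_(j <- r | P j) G j v).
Proof.
move=> hG; apply: continuous_big => //; exact: add_continuous.
Qed.

Section Dec.
Variables (R : realType) (m : nat) (lam1 lam2 : R).
Definition D0 (v : 'rV[R]_(m * m.+1)) (i : 'I_m) := lam1 * v ord0 (mxvec_index i ord0).
Definition D (v : 'rV[R]_(m * m.+1)) (i j : 'I_m) :=
  lam2 * (if (i < j)%N then v ord0 (mxvec_index i (lift ord0 j))
          else if (j < i)%N then - v ord0 (mxvec_index j (lift ord0 i)) else 0).
End Dec.

Lemma cont_Phi (R : realType) (m : nat) (lam1 lam2 : R) (f : 'I_m -> R) :
  continuous (fun v : 'rV[R]_(m * m.+1) => Phi f (D0 lam1 v) (D lam2 v)).
Proof.
have cc : forall k, continuous (fun v : 'rV[R]_(m * m.+1) => v ord0 k).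
  by move=> k; exact: coord_continuous.
apply: cont_sum => i v.

have hr : {for v, continuous (fun v : 'rV[R]_(m * m.+1) =>
   f i + D0 lam1 v i + \sum_(j < m | j != i) D lam2 v i j)}.
  apply: continuousD; first apply: continuousD.
  - exact: cst_continuous.
  - apply: continuousM; first exact: cst_continuous.
    exact: cc.
  - apply: (cont_sum (G := fun j v => D lam2 v i j)) => j w.
    case: (ltngtP i j) => h.
    + have -> : (fun v => D lam2 v i j) = (fun v => lam2 * v ord0 (mxvec_index i (lift ord0 j))).
        by apply: funext => u; rewrite /D h.
      apply: continuousM; first exact: cst_continuous.
      exact: cc.
    + have -> : (fun v => D lam2 v i j) = (fun v => (- lam2) * v ord0 (mxvec_index j (lift ord0 i))).
        by apply: funext => u; rewrite /D h ltnNge ltnW // mulrN mulNr.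
      apply: (continuousM (s := fun _ => - lam2) (t := fun v0 : 'rV[R]_(m * m.+1) => v0 ord0 (mxvec_index j (lift ord0 i)))); first exact: cst_continuous.
      exact: cc.
    + have -> : (fun v => D lam2 v i j) = (fun v => lam2 * 0).
        by apply: funext => u; rewrite /D h ltnn.
      exact: cst_continuous.
exact: (continuousM hr hr).
Qed.

Lemma dproj (R : realType) (lam y : R) : 0 <= lam -> - lam <= y <= lam ->
  (- 1 <= (if lam == 0 then 0 else y / lam) <= 1) /\
  lam * (if lam == 0 then 0 else y / lam) = y.
Proof.
move=> h0 /andP[ha hb]; case: eqP => [l0|/eqP l0].
  by rewrite l0 mul0r; split; [rewrite lerN10 ler01 | move: ha hb; rewrite l0; lra].
have lp : 0 < lam by rewrite lt_def l0.
split; last by rewrite mulrC divfK.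
by rewrite ler_pdivrMr // ler_pdivlMr // mul1r mulN1r ha hb.
Qed.

Lemma box_scale (R : realType) (lam x : R) : 0 <= lam -> -1 <= x <= 1 ->
  - lam <= lam * x <= lam.
Proof. move=> h /andP[a b]; apply/andP; split; nra. Qed.

Lemma exists_min (R : realType) (m : nat) (lam1 lam2 : R) (f : 'I_m -> R)
  (h1 : 0 <= lam1) (h2 : 0 <= lam2) :
  exists t0 t, feas lam1 lam2 t0 t /\
    forall t0' t', feas lam1 lam2 t0' t' -> Phi f t0 t <= Phi f t0' t'.
Proof.
pose A := [set v : 'rV[R]_(m * m.+1) | forall k, `[-1, 1]%classic (v ord0 k)]%classic.
have A0 : (A !=set0)%classic.
  by exists 0 => k /=; rewrite mxE in_itv /= lerN10 ler01.
have cA : compact A.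
  have H := @rV_compact R (m * m.+1) (fun _ => `[-1, 1]%classic) (fun _ => @segment_compact R (-1) 1). exact: H.
have [c cinA cmin] := compact_EVT_min A0 cA
   (continuous_subspaceT (@cont_Phi R m lam1 lam2 f)).
have cA' : forall k, -1 <= c ord0 k <= 1.
  move=> k; have := set_mem cinA k; by rewrite /= in_itv.
exists (D0 lam1 c), (D lam2 c); split.
  split; first by move=> i; rewrite /D0; apply: box_scale.
  split.
    move=> i j; rewrite /D; case: ifP => _; first by apply: box_scale.
    case: ifP => _.
      rewrite mulrN; have := box_scale h2 (cA' (mxvec_index j (lift ord0 i))).
      move=> /andP[a b]; apply/andP; split; lra.
    by rewrite mulr0 oppr_le0 h2.
  move=> i j; rewrite /D; case: (ltngtP i j) => h.
  - by rewrite mulrN opprK.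
  - by rewrite mulrN.
  - by rewrite mulr0 oppr0.
move=> t0' t' [b0 [bt ant]].
pose d1 (y : R) := if lam1 == 0 then 0 else y / lam1.
pose d2 (y : R) := if lam2 == 0 then 0 else y / lam2.
pose M := \matrix_(i < m, k < m.+1)
  (match unlift ord0 k with None => d1 (t0' i) | Some j => d2 (t' i j) end).
pose v := mxvec M.
have vE : forall i k, v ord0 (mxvec_index i k) = M i k by move=> i k; rewrite mxvecE.
have vA : v \in A.
  apply: mem_set => k /=; rewrite in_itv /=.
  case/mxvec_indexP: k => i k; rewrite vE mxE.
  case: (unlift ord0 k) => [j|].
    by have [] := dproj h2 (bt i j).
  by have [] := dproj h1 (b0 i).
apply: (le_trans (cmin v vA)); rewrite le_eqVlt; apply/orP; left; apply/eqP.
apply: Phi_ext.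
  move=> i; rewrite /D0 vE mxE unlift_none.
  by have [] := dproj h1 (b0 i).
move=> i j; rewrite /D; case: (ltngtP i j) => h.
- rewrite vE mxE liftK.
  by have [] := dproj h2 (bt i j).
- rewrite vE mxE liftK mulrN.
  have [_ ->] := dproj h2 (bt j i).
  by rewrite ant opprK.
- have ij : i = j by apply: val_inj.
  rewrite -ij mulr0; have := ant i i; lra.
Qed.

Unset Implicit Arguments.

(* Indices 1..m are represented by 'I_m (0-based: index i corresponds to i+1). *)
Theorem theorem1 (R : realType) (m : nat) (hm : (1 <= m)%N)
  (lam1 lam2 : R) (h1 : 0 <= lam1) (h2 : 0 <= lam2)
  (f : 'I_m -> R) (hf : forall i j : 'I_m, (i <= j)%N -> f j <= f i) :
  (exists (tau0 : 'I_m -> R) (tau : 'I_m -> 'I_m -> R),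
      (forall i, - lam1 <= tau0 i <= lam1) /\
      (forall i j, i != j -> - lam2 <= tau i j <= lam2) /\
      (forall i j, i != j -> tau i j = - tau j i) /\
      (forall i, f i + tau0 i + \sum_(j < m | j != i) tau i j = 0))
  <->
  ((forall k : nat, (1 <= k <= m)%N ->
      \sum_(j < m | (j < k)%N) f j <= lam1 * k%:R + lam2 * (k * (m - k))%:R) /\
   (forall k : nat, (k <= m - 1)%N ->
      \sum_(j < m | (k <= j)%N) f j >= - (lam1 * (m - k)%:R) - lam2 * (k * (m - k))%:R)).
Proof.
split.
  move=> [tau0 [tau [h0 [ht [ha he]]]]]; split.
    move=> k /andP[k1 km].
    have := @nec_bound R m lam1 lam2 f tau0 tau h0 ht ha he [set j : 'I_m | (j < k)%N].
    rewrite card_prefix // ler_norml => /andP[_ H].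
    by rewrite (eq_bigl (fun j : 'I_m => j \in [set j : 'I_m | (j < k)%N])) //
       => j; rewrite inE.
  move=> k km.
  have km' : (k <= m)%N by lia.
  have := @nec_bound R m lam1 lam2 f tau0 tau h0 ht ha he (~: [set j : 'I_m | (j < k)%N]).
  have hc : #|~: [set j : 'I_m | (j < k)%N]| = (m - k)%N.
    by rewrite cardsCs finset.setCK card_ord card_prefix.
  rewrite hc ler_norml => /andP[H _].
  have e : (m - (m - k))%N = k by lia.
  rewrite e mulnC opprD in H.
  rewrite (eq_bigl (fun j : 'I_m => j \in ~: [set j : 'I_m | (j < k)%N])) //.
  by move=> j; rewrite !inE -leqNgt.
move=> [Hu Hl].
have [t0 [t [hfe hmin]]] := @exists_min R m lam1 lam2 f h1 h2.
have cardS : forall S : {set 'I_m}, (#|S| <= m)%N.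
  by move=> S; rewrite -[m in (_ <= m)%N]card_ord max_card.
have Hup : forall S : {set 'I_m}, (0 < #|S|)%N ->
     \sum_(i in S) f i <= lam1 * #|S|%:R + lam2 * (#|S| * (m - #|S|))%:R.
  move=> S hS; apply: (le_trans (sum_sorted_le hf S)); apply: Hu.
  by rewrite hS cardS.
have Hlo : forall S : {set 'I_m}, (0 < #|S|)%N ->
     - (lam1 * #|S|%:R) - lam2 * (#|S| * (m - #|S|))%:R <= \sum_(i in S) f i.
  move=> S hS; apply: le_trans (sum_sorted_ge hf S).
  have hk : (m - #|S| <= m - 1)%N by have := cardS S; lia.
  have := Hl _ hk.
  have -> : (m - (m - #|S|))%N = #|S| by have := cardS S; lia.
  by rewrite mulnC.
have [b0 [bt ant]] := hfe.
exists t0, t; split; first exact: b0.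
split; first by move=> i j _; exact: bt.
split; first by move=> i j _; exact: ant.
move=> i; apply/eqP; rewrite eq_le.
by rewrite (no_pos hfe hmin Hup) (no_neg hfe hmin Hlo).
Qed.
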